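(* Let $\Psi$ be a universal resource. Then $\mathcal{N}_{\mathrm{LE}}(\Psi)=\infty$.
   Context: For an $N$-qubit $|\psi\rangle$ and an $n$-qubit $|\phi\rangle$, $n\le N$, write $|\psi\rangle\geq_{\mathrm{LOCC}}|\phi\rangle$ if for some set $A$ of $n$ qubits the transformation $|\psi\rangle\to|\phi\rangle^A|0\rangle^{\bar A}$ is achievable exactly and with probability one by LOCC (each qubit a separate party). A resource is an infinite family $\Psi$ of multi-qubit pure states; it is universal if for every $n$ and every $n$-qubit $|\phi\rangle$ some $|\psi\rangle\in\Psi$ has $|\psi\rangle\geq_{\mathrm{LOCC}}|\phi\rangle$. For a state $|\psi\rangle$ on qubits $V$ and distinct qubits $\alpha,\beta\in V$, set $E^{\alpha,\beta}_{\mathrm{Bell}}(|\psi\rangle)=1$ if LOCC can deterministically (with probability one) and exactly produce the Bell state $\frac{1}{\sqrt2}(|00\rangle+|11\rangle)$ on the qubits $\alpha,\beta$ starting from $|\psi\rangle$, and $0$ otherwise. $\mathcal{N}_{\mathrm{LE}}(|\psi\rangle)$ is the maximal size $|A|$ of a subset $A\subseteq V$ such that $E^{\alpha,\beta}_{\mathrm{Bell}}(|\psi\rangle)=1$ for all distinct $\alpha,\beta\in A$. $\mathcal{N}_{\mathrm{LE}}(\Psi):=\sup_{|\psi\rangle\in\Psi}\mathcal{N}_{\mathrm{LE}}(|\psi\rangle)$. *)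

(* Defs.v *)
From HB Require Import structures.
From mathcomp Require Import all_boot all_order all_algebra.
From mathcomp Require Import complex.
Set Implicit Arguments. Unset Strict Implicit. Unset Printing Implicit Defensive.
Import Order.TTheory GRing.Theory Num.Theory.
Local Open Scope ring_scope.

Section QuantumDefs.
Variable R : rcfType.
Local Notation C := R[i].

Definition basis (N : nat) := {ffun 'I_N -> bool}.

(* (unnormalised) vectors of the N-qubit Hilbert space (C^2)^{\otimes N} *)
Definition qvec (N : nat) := basis N -> C.

Definition normalized N (psi : qvec N) : Prop :=
  \sum_(x : basis N) `|psi x| ^+ 2 = 1.

Definition setbit N (x : basis N) (k : 'I_N) (b : bool) : basis N :=
  [ffun j => if j == k then b else x j].

Definition bidx (b : bool) : 'I_2 := inord (nat_of_bool b).

(* the operator M : C^2 -> C^2 (a 2x2 matrix, rows = output index) acting on qubit k *)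
Definition apply_local N (k : 'I_N) (M : 'M[C]_2) (psi : qvec N) : qvec N :=
  fun x => \sum_(b : bool) M (bidx (x k)) (bidx b) * psi (setbit x k b).

Definition adjoint (M : 'M[C]_2) : 'M[C]_2 := (map_mx Num.conj M)^T.

(* A finite-round LOCC protocol (each qubit is a separate party): at each
   node, party k performs a local measurement with finitely many outcomes
   given by Kraus operators M i (i < m), announces the outcome, and the
   protocol continues with the subtree (next i). *)
Inductive protocol (N : nat) : Type :=
| Leaf : protocol N
| Node : forall (k : 'I_N) (m : nat), ('I_m -> 'M[C]_2) -> ('I_m -> protocol N) -> protocol N.

Fixpoint wf_protocol N (p : protocol N) : Prop :=
  match p with
  | Leaf => True
  | Node k m M next =>
      \sum_(i < m) adjoint (M i) *m M i = 1%:M /\ forall i, wf_protocol (next i)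
  end.

(* [achieves p psi G]: every branch of p applied to psi ends in an
   (unnormalised) vector satisfying G. Branches of probability zero give the
   zero vector. *)
Fixpoint achieves N (p : protocol N) (psi : qvec N) (G : qvec N -> Prop) : Prop :=
  match p with
  | Leaf => G psi
  | Node k m M next => forall i, achieves (next i) (apply_local k (M i) psi) G
  end.

Definition LOCC_reach N (psi : qvec N) (G : qvec N -> Prop) : Prop :=
  exists p : protocol N, wf_protocol p /\ achieves p psi G.

(* the N-qubit vector |phi>^A |0>^{\bar A}, with A = image of the injection f *)
Definition embed n N (f : 'I_n -> 'I_N) (phi : qvec n) : qvec N :=
  fun x => (if [forall j, (j \notin codom f) ==> ~~ x j] then 1 else 0)
           * phi [ffun i => x (f i)].

Definition LOCC_ge N n (psi : qvec N) (phi : qvec n) : Prop :=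
  exists f : 'I_n -> 'I_N, injective f /\
    LOCC_reach psi (fun out => exists c : C, out = fun x => c * embed f phi x).

Definition resource := forall N : nat, qvec N -> Prop.

Definition is_resource (Psi : resource) : Prop :=
  forall N psi, Psi N psi -> normalized psi.

Definition universal (Psi : resource) : Prop :=
  forall n : nat, (0 < n)%N -> forall phi : qvec n, normalized phi ->
    exists N (psi : qvec N), Psi N psi /\ LOCC_ge psi phi.

(* the state on N qubits is (|00>+|11>)/sqrt 2 on qubits a,b tensored with an
   arbitrary (unnormalised) vector chi on the remaining qubits; the factor
   1/sqrt 2 is absorbed into chi. chi is read on the bits outside {a,b}. *)
Definition bell_on N (a b : 'I_N) (out : qvec N) : Prop :=
  exists chi : qvec N,
    out = fun x => (if x a == x b then 1 else 0)
                   * chi (setbit (setbit x a false) b false).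

Definition E_Bell N (psi : qvec N) (a b : 'I_N) : Prop :=
  LOCC_reach psi (bell_on a b).

(* A is a set of qubits realizing N_LE(psi) >= #|A| *)
Definition LE_set N (psi : qvec N) (A : {set 'I_N}) : Prop :=
  forall a b, a \in A -> b \in A -> a != b -> E_Bell psi a b.

(* N_LE(Psi) = infinity, i.e. sup_{psi in Psi} N_LE(psi) is unbounded *)
Definition NLE_infinite (Psi : resource) : Prop :=
  forall m : nat, exists N (psi : qvec N) (A : {set 'I_N}),
    Psi N psi /\ LE_set psi A /\ (m <= #|A|)%N.

End QuantumDefs.

(* Main.v *)
Require Import Defs.
From mathcomp Require Import all_boot all_order all_algebra.
From mathcomp Require Import complex.
From Stdlib Require Import FunctionalExtensionality.
From mathcomp Require Import ring.
Set Implicit Arguments. Unset Strict Implicit. Unset Printing Implicit Defensive.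
Import Order.TTheory GRing.Theory Num.Theory.
Local Open Scope ring_scope.

Section Aux.
Variable R : rcfType.
Local Notation C := R[i].
Variable N : nat.

Lemma bidx_val (b : bool) : (bidx b : nat) = b.
Proof. by rewrite /bidx inordK //; case: b. Qed.

Lemma setbitE (x : basis N) k b j : setbit x k b j = if j == k then b else x j.
Proof. by rewrite /setbit ffunE. Qed.

Lemma setbit_id (x : basis N) k : setbit x k (x k) = x.
Proof. by apply/ffunP => j; rewrite setbitE; case: eqP => // ->. Qed.

Definition zo (S : {set 'I_N}) (x : basis N) := [forall j, (j \notin S) ==> ~~ x j].
Definition eqS (S : {set 'I_N}) (x : basis N) (v : bool) := [forall j in S, x j == v].
Definition F (c : C) (S : {set 'I_N}) : qvec R N :=
  fun x => if zo S x && (eqS S x false || eqS S x true) then c else 0.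

Lemma zo_setbit (S : {set 'I_N}) (x : basis N) k b : k \in S -> zo S (setbit x k b) = zo S x.
Proof.
move=> kS; apply/forallP/forallP => H j; move: (H j); rewrite setbitE;
  case: eqP => // ->; by rewrite kS.
Qed.

Lemma eqS_setbit (S : {set 'I_N}) (x : basis N) k b v : k \in S ->
  eqS S (setbit x k b) v = (b == v) && eqS (S :\ k) x v.
Proof.
move=> kS; apply/forallP/andP.
- move=> H; split; first by move: (H k); rewrite kS setbitE eqxx.
  apply/forallP => j; apply/implyP; rewrite !inE => /andP [jk jS].
  by move: (H j); rewrite jS setbitE (negbTE jk).
- case=> /eqP bv /forallP H j; apply/implyP => jS; rewrite setbitE.
  case: (j =P k) => [_|/eqP jk]; first by rewrite bv.
  by move: (H j); rewrite !inE jk jS.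
Qed.

Lemma zo_del (S : {set 'I_N}) (x : basis N) k : k \in S -> zo (S :\ k) x = zo S x && ~~ x k.
Proof.
move=> kS; apply/forallP/andP.
- move=> H; split; last by move: (H k); rewrite !inE eqxx.
  apply/forallP => j; apply/implyP => jS; move: (H j); rewrite !inE.
  by rewrite (negbTE jS) andbF.
- case=> /forallP H xk j; apply/implyP; rewrite !inE negb_and negbK.
  case/orP => [/eqP -> //|jS]; by move: (H j); rewrite jS.
Qed.

Lemma eqS_excl (S : {set 'I_N}) (x : basis N) a : a \in S -> eqS S x false && eqS S x true = false.
Proof.
move=> aS; apply/negbTE/negP => /andP [/forallP H1 /forallP H2].
by move: (H1 a) (H2 a); rewrite aS /= => /eqP -> .
Qed.

Lemma eqS_val (S : {set 'I_N}) (x : basis N) a v : a \in S -> eqS S x v -> x a = v.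
Proof. by move=> aS /forallP /(_ a); rewrite aS => /eqP. Qed.


Definition h : C := sqrtC (2^-1).
Definition Mp : 'M[C]_2 := \matrix_(i < 2, j < 2) (if (i : nat) == 0%N then h else 0).
Definition Mm : 'M[C]_2 := \matrix_(i < 2, j < 2)
  (if (i : nat) == 0%N then (if (j : nat) == 0%N then h else - h) else 0).
Definition Zm : 'M[C]_2 := \matrix_(i < 2, j < 2)
  (if i == j then (if (i : nat) == 0%N then 1 else -1) else 0).

Lemma apply_Z a (v : qvec R N) x :
  apply_local a Zm v x = (if x a then -1 else 1) * v x.
Proof.
rewrite /apply_local big_bool /= !mxE.
rewrite -!(inj_eq val_inj) /= !bidx_val.
rewrite -[v x](congr1 v (setbit_id x a)); case: (x a) => /=;
  by rewrite ?mul0r ?addr0 ?add0r.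
Qed.

Lemma meas_p k (c : C) (S : {set 'I_N}) a : k \in S -> a \in S :\ k ->
  apply_local k Mp (F c S) = F (h * c) (S :\ k).
Proof.
move=> kS aS; apply: functional_extensionality => x.
rewrite /apply_local big_bool /= !mxE !bidx_val /F !zo_setbit // !eqS_setbit //=.
rewrite zo_del //.
case: (x k) => /=; first by rewrite !mul0r addr0 andbF.
rewrite andbT; have := eqS_excl x aS.
case: (zo S x); case: (eqS (S :\ k) x false); case: (eqS (S :\ k) x true) => //= _;
  by rewrite ?mulr0 ?addr0 ?add0r.
Qed.

Lemma meas_m k (c : C) (S : {set 'I_N}) a : k \in S -> a \in S :\ k ->
  apply_local a Zm (apply_local k Mm (F c S)) = F (h * c) (S :\ k).
Proof.
move=> kS aS; apply: functional_extensionality => x.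
rewrite apply_Z.
rewrite /apply_local big_bool /= !mxE !bidx_val /F !zo_setbit // !eqS_setbit //=.
rewrite zo_del //.
case: (x k) => /=; first by rewrite !mul0r addr0 andbF mulr0.
rewrite andbT; have := eqS_excl x aS.
have := @eqS_val _ x _ _ aS.
case: (zo S x); case E0: (eqS (S :\ k) x false); case E1: (eqS (S :\ k) x true) => //= H _;
  rewrite ?mulr0 ?addr0 ?add0r //.
all: try rewrite (H false E0); try rewrite (H true E1);
  by rewrite /= ?mulr0 ?mul1r ?mulN1r ?mulNr ?opprK.
Qed.


Lemma h_conj : h^* = h.
Proof. by apply: geC0_conj; rewrite sqrtC_ge0 invr_ge0 ler0n. Qed.

Lemma hh : h * h = 2^-1.
Proof. by rewrite -expr2 sqrtCK. Qed.

Lemma half_half : (2^-1 : C) + 2^-1 = 1.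
Proof. by field. Qed.

Definition Ms (i : 'I_2) := if (i : nat) == 0%N then Mp else Mm.

Lemma wf_meas : \sum_(i < 2) adjoint (Ms i) *m Ms i = 1%:M.
Proof.
rewrite big_ord_recr big_ord_recl big_ord0 /=; apply/matrixP => i j.
rewrite !mxE !big_ord_recr !big_ord0 /= !mxE /=.
case: i => [[|[|i]] Hi] //; case: j => [[|[|j]] Hj] //=;
  rewrite ?conjC0 ?mul0r ?mulr0 ?addr0 ?add0r ?rmorphN ?h_conj ?mulNr ?mulrN ?opprK ?hh //.
all: rewrite ?(h_conj : Num.conj h = h) ?hh ?subrr ?half_half //.
all: rewrite [_ * h](_ : _ = 2^-1) ?subrr ?half_half //.
all: by rewrite -hh; congr (_ * _); exact: h_conj.
Qed.

Lemma wf_Z : \sum_(i < 1) adjoint ((fun _ => Zm) i) *m Zm = 1%:M.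
Proof.
rewrite big_ord_recr big_ord0 /= add0r; apply/matrixP => i j.
rewrite !mxE !big_ord_recr !big_ord0 /= !mxE /=.
case: i => [[|[|i]] Hi] //; case: j => [[|[|j]] Hj] //=;
  rewrite ?conjC0 ?conjC1 ?mul0r ?mulr0 ?addr0 ?add0r ?rmorphN ?conjC1 ?mulN1r ?opprK ?mulr1 ?rmorph1 ?mulNr ?mulrN ?mulr1 ?opprK //.
Qed.


Section Proto.
Variables a b : 'I_N.

Fixpoint P (ks : seq 'I_N) : protocol R N :=
  match ks with
  | [::] => Leaf R N
  | k :: ks' => Node k Ms (fun i : 'I_2 => if (i : nat) == 0%N then P ks'
                 else Node a (fun _ : 'I_1 => Zm) (fun _ => P ks'))
  end.

Lemma wf_P ks : wf_protocol (P ks).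
Proof.
elim: ks => [//|k ks IH] /=; split; first exact: wf_meas.
by move=> i; case: ifP => // _; split; [exact: wf_Z | ].
Qed.

Lemma eqS2 (x : basis N) v : eqS [set a; b] x v = (x a == v) && (x b == v).
Proof.
apply/forallP/andP.
- by move=> H; split; [move: (H a) | move: (H b)]; rewrite !inE eqxx ?orbT.
- case=> Ha Hb j; apply/implyP; rewrite !inE => /orP [] /eqP -> //.
Qed.

Lemma bell_base c : bell_on a b (F c [set a; b]).
Proof.
exists (fun y => if [forall j, ~~ y j] then c else 0).
apply: functional_extensionality => x; rewrite /F !eqS2.
have -> : [forall j, ~~ setbit (setbit x a false) b false j] = zo [set a; b] x.
  apply/forallP/forallP => H j; move: (H j); rewrite !setbitE !inE.
  - by case: (j =P b) => [->|_]; rewrite ?orbT // ; case: (j =P a) => [->|].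
  - by case: (j =P b) => [->|_] //; case: (j =P a) => [->|] //.
case: (zo _ x); case: (x a); case: (x b) => /=;
  by rewrite ?mul1r ?mul0r.
Qed.

Lemma ach_P ks c : uniq ks -> a \notin ks -> b \notin ks ->
  achieves (P ks) (F c ([set a; b] :|: [set j in ks])) (bell_on a b).
Proof.
elim: ks c => [|k ks IH] c /=.
  move=> _ _ _; have -> : [set a; b] :|: [set j in [::]] = [set a; b].
    by apply/setP => j; rewrite !inE orbF.
  exact: bell_base.
rewrite !inE !negb_or => /andP [kks uks] /andP [ak aks] /andP [bk bks].
set S := _ :|: _.
have kS : k \in S by rewrite !inE eqxx !orbT.
have aS : a \in S :\ k by rewrite !inE ak eqxx.
have Sk : S :\ k = [set a; b] :|: [set j in ks].
  apply/setP => j; rewrite !inE.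
  case: (j =P k) => [->|_] /=; last by [].
  by rewrite (negbTE kks) orbF eq_sym (negbTE ak) eq_sym (negbTE bk).
case=> [[|[|i]] Hi] //=.
  by rewrite /Ms /= (meas_p c kS aS) Sk; exact: IH.
move=> _; rewrite /Ms /= (meas_m c kS aS) Sk; exact: IH.
Qed.

End Proto.

Fixpoint graft (p q : protocol R N) : protocol R N :=
  match p with
  | Leaf => q
  | Node k m M next => Node k M (fun i => graft (next i) q)
  end.

Lemma graft_wf p q : wf_protocol p -> wf_protocol q -> wf_protocol (graft p q).
Proof.
elim: p => [//|k m M next IH] /= [HM Hn] Hq; split => // i; exact: IH.
Qed.

Lemma graft_ach p q psi (G H : qvec R N -> Prop) :
  achieves p psi G -> (forall v, G v -> achieves q v H) -> achieves (graft p q) psi H.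
Proof.
elim: p psi => [|k m M next IH] psi /=; first by move=> Gp HG; exact: HG.
move=> Hp HG i; exact: IH.
Qed.

End Aux.

Definition phi (R : rcfType) n : qvec R n :=
  fun y => if [forall i, ~~ y i] || [forall i, y i] then @h R else 0.

Lemma phi_norm (R : rcfType) m : normalized (@phi R m.+2).
Proof.
rewrite /normalized.
pose y0 : basis m.+2 := [ffun => false].
pose y1 : basis m.+2 := [ffun => true].
have E0 (y : basis m.+2) : [forall i, ~~ y i] = (y == y0).
  apply/forallP/eqP => [H|->] ; last by move=> i; rewrite ffunE.
  by apply/ffunP => i; rewrite ffunE; apply/negbTE.
have E1 (y : basis m.+2) : [forall i, y i] = (y == y1).
  apply/forallP/eqP => [H|->] ; last by move=> i; rewrite ffunE.
  by apply/ffunP => i; rewrite ffunE; apply: H.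
have y10 : y1 != y0 by apply/eqP => /ffunP /(_ ord0); rewrite !ffunE.
rewrite (bigD1 y0) // (bigD1 y1) //= big1; last first.
  by move=> y /andP [n1 n0]; rewrite /phi E0 E1 (negbTE n1) (negbTE n0) normr0 expr0n.
have hn : `|@h R| ^+ 2 = 2^-1.
  by rewrite ger0_norm ?sqrtCK // sqrtC_ge0 invr_ge0 ler0n.
by rewrite /phi /= (E0 y1) (E1 y1) (E0 y0) !eqxx orbT hn addr0 half_half.
Qed.

Lemma embedF (R : rcfType) n N (f : 'I_n -> 'I_N) (c : R[i]) :
  (fun x => c * embed f (@phi R n) x) = F (c * h R) [set j | j \in codom f].
Proof.
apply: functional_extensionality => x; rewrite /embed /phi /F.
have -> : zo [set j | j \in codom f] x = [forall j, (j \notin codom f) ==> ~~ x j].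
  by apply: eq_forallb => j; rewrite inE.
have Ev v : eqS [set j | j \in codom f] x v = [forall i, [ffun i => x (f i)] i == v].
  apply/forallP/forallP => H j.
  - by move: (H (f j)); rewrite inE codom_f ffunE.
  - apply/implyP; rewrite inE => /codomP [i ->]; by move: (H i); rewrite ffunE.
have -> : [forall i, ~~ [ffun i => x (f i)] i] = eqS [set j | j \in codom f] x false.
  by rewrite Ev; apply: eq_forallb => i; case: ([ffun i => x (f i)] i).
have -> : [forall i, [ffun i => x (f i)] i] = eqS [set j | j \in codom f] x true.
  by rewrite Ev; apply: eq_forallb => i; case: ([ffun i => x (f i)] i).
case: [forall j, _]; case: (eqS _ _ _ || _) => /=; by rewrite ?mulr1 ?mul1r ?mulr0 ?mul0r ?mulr0.
Qed.

Theorem theorem6 (R : rcfType) (Psi : resource R) :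
  is_resource Psi -> universal Psi -> NLE_infinite Psi.
Proof.
move=> _ univ m.
case: (univ m.+2 erefl (@phi R m.+2) (phi_norm R m)) => N [psi [HP [f [finj [p [pwf pach]]]]]].
set A := [set j | j \in codom f].
exists N, psi, A; split => //; split; last first.
  by rewrite /A cardsE (card_codom finj) card_ord; apply/leqW/leqW.
move=> a b aA bA ab.
exists (graft p (@P R N a (enum (A :\: [set a; b])))); split.
  by apply: graft_wf => //; exact: wf_P.
apply: (graft_ach pach) => v [c ->].
rewrite embedF -/A.
have EA : A = [set a; b] :|: [set j in enum (A :\: [set a; b])].
  apply/setP => j; rewrite !inE mem_enum !inE.
  case: (j =P a) => [->|_] /=; first by move: aA; rewrite inE.
  case: (j =P b) => [->|_] /=; first by move: bA; rewrite inE.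
  by [].
rewrite [X in F _ X]EA; apply: ach_P; first exact: enum_uniq.
- by rewrite mem_enum !inE eqxx.
- by rewrite mem_enum !inE eqxx orbT.
Qed.
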